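(* Assume Assumption A and let $(A_i,\tau_i)_{i=1}^n$ be a solution of system (S) with nonnegative initial data $\varphi_i\in X_\alpha$ satisfying $\int_{-\tau_{i0}}^0 f_i(Z_{i\varphi}(\sigma))\,d\sigma=1$ for all $i=1,\dots,n$. Then for each $i=1,\dots,n$ there exists $t_i^*>0$ such that $t_i^*-\tau_i(t_i^* )=0$.
   Context: For $\alpha>0$, $X_\alpha:=\{\phi\in C((-\infty,0]): e^{-\alpha|\cdot|}\phi(\cdot)\in BUC((-\infty,0])\cap \mathrm{Lip}((-\infty,0])\}$. The $n$-species system (S): for $i=1,\dots,n$, $$A_i'(t)=-\mu_{A_i}A_i(t)+\beta_i e^{-\mu_{J_i}\tau_i(t)}\frac{f_i(Z_i(t))}{f_i(Z_i(t-\tau_i(t)))}A_i(t-\tau_i(t)),\quad t\ge0,$$ $$\int_{t-\tau_i(t)}^{t}f_i(Z_i(\sigma))\,d\sigma=\int_{-\tau_{i0}}^{0}f_i(Z_{i\varphi}(\sigma))\,d\sigma,\quad t\ge0,$$ with $A_i(t)=\varphi_i(t)$ for $t\le0$, $\tau_i(0)=\tau_{i0}\ge0$, where $Z_i(t)=\sum_{j=1}^n\zeta_{ij}A_j(t)$, $Z_{i\varphi}(t)=\sum_{j=1}^n\zeta_{ij}\varphi_j(t)$, $\zeta_{ij}\ge0$. A solution consists of continuous $A_i:\mathbb{R}\to[0,\infty)$, differentiable on $[0,\infty)$, and $\tau_i:[0,\infty)\to[0,\infty)$ satisfying these equations for all $t\ge0$. Assumption A: for each $i$, (i) $\mu_{A_i}>0$,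 $\mu_{J_i}>0$, $\beta_i>0$, $\zeta_{ii}>0$; (ii) $f_i:\mathbb{R}\to(0,\infty)$ is Lipschitz continuous and continuously differentiable with $f_i>0$, $f_i'\le0$ on $\mathbb{R}$, $\lim_{x\to+\infty}f_i(x)=0$, and $\sup_{x\ge0}\frac{f_i(x)}{f_i(cx)}<+\infty$ for every $c\ge1$. *)

(* Defs.v *)
From Stdlib Require Import Reals Lra.
Open Scope R_scope.

Fixpoint sumR (n : nat) (g : nat -> R) : R :=
  match n with O => 0 | S m => sumR m g + g m end.

Definition cont_nonpos (phi : R -> R) : Prop :=
  forall s, s <= 0 -> forall eps, eps > 0 -> exists delta, delta > 0 /\
    forall s', s' <= 0 -> Rabs (s' - s) < delta -> Rabs (phi s' - phi s) < eps.

Definition BUC_nonpos (g : R -> R) : Prop :=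
  (exists M, forall s, s <= 0 -> Rabs (g s) <= M) /\
  (forall eps, eps > 0 -> exists delta, delta > 0 /\
     forall s s', s <= 0 -> s' <= 0 -> Rabs (s' - s) < delta ->
       Rabs (g s' - g s) < eps).

Definition Lip_nonpos (g : R -> R) : Prop :=
  exists L, forall s s', s <= 0 -> s' <= 0 -> Rabs (g s - g s') <= L * Rabs (s - s').

Definition X_alpha (alpha : R) (phi : R -> R) : Prop :=
  cont_nonpos phi /\
  BUC_nonpos (fun s => exp (- alpha * Rabs s) * phi s) /\
  Lip_nonpos (fun s => exp (- alpha * Rabs s) * phi s).

Definition integral_eq (g : R -> R) (a b v : R) : Prop :=
  exists pr : Riemann_integrable g a b, RiemannInt pr = v.

Definition deriv_nonneg (A : R -> R) (t l : R) : Prop :=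
  forall eps, eps > 0 -> exists delta, delta > 0 /\
    forall h, h <> 0 -> Rabs h < delta -> 0 <= t + h ->
      Rabs ((A (t + h) - A t) / h - l) < eps.

Definition AssumptionA (n : nat) (muA muJ beta : nat -> R) (zeta : nat -> nat -> R)
  (f : nat -> R -> R) : Prop :=
  forall i, (i < n)%nat ->
    muA i > 0 /\ muJ i > 0 /\ beta i > 0 /\ zeta i i > 0 /\
    (forall j, (j < n)%nat -> zeta i j >= 0) /\
    (exists L, forall x y, Rabs (f i x - f i y) <= L * Rabs (x - y)) /\
    (exists f', (forall x, derivable_pt_lim (f i) x (f' x)) /\ continuity f' /\
                (forall x, f' x <= 0)) /\
    (forall x, f i x > 0) /\
    (forall eps, eps > 0 -> exists X, forall x, x >= X -> Rabs (f i x) < eps) /\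
    (forall c, c >= 1 -> exists M, forall x, x >= 0 -> f i x / f i (c * x) <= M).

Definition Zfun (n : nat) (zeta : nat -> nat -> R) (A : nat -> R -> R) (i : nat) (t : R) : R :=
  sumR n (fun j => zeta i j * A j t).

Definition is_solution (n : nat) (muA muJ beta : nat -> R) (zeta : nat -> nat -> R)
  (f : nat -> R -> R) (phi : nat -> R -> R) (tau0 : nat -> R)
  (A : nat -> R -> R) (tau : nat -> R -> R) : Prop :=
  forall i, (i < n)%nat ->
    continuity (A i) /\
    (forall t, 0 <= A i t) /\
    (forall t, t <= 0 -> A i t = phi i t) /\
    (forall t, 0 <= t -> 0 <= tau i t) /\
    tau0 i >= 0 /\ tau i 0 = tau0 i /\
    (forall t, 0 <= t ->
       deriv_nonneg (A i) t
         (- muA i * A i t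
          + beta i * exp (- muJ i * tau i t)
            * (f i (Zfun n zeta A i t) / f i (Zfun n zeta A i (t - tau i t)))
            * A i (t - tau i t))) /\
    (forall t, 0 <= t ->
       exists v, integral_eq (fun s => f i (Zfun n zeta A i s)) (t - tau i t) t v /\
                 integral_eq (fun s => f i (Zfun n zeta phi i s)) (- tau0 i) 0 v).

(* Main.v *)
Require Import Defs.
From Stdlib Require Import Reals Lra Lia.
From Coquelicot Require Import Coquelicot.
Open Scope R_scope.

Lemma cont_c (g : R -> R) x : continuity g -> continuous g x.
Proof. intros H; apply continuity_pt_filterlim, H. Qed.

Lemma exR (g : R -> R) a b : continuity g -> ex_RInt g a b.
Proof. intros H; apply (ex_RInt_continuous (V:=R_CompleteNormedModule)); intros; apply cont_c, H. Qed.

Lemma chas (g : R -> R) a b c : continuity g ->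
  RInt g a b + RInt g b c = RInt g a c.
Proof. intros H. apply (RInt_Chasles g a b c); apply exR, H. Qed.

Lemma RInt_pos (g : R -> R) a b : continuity g -> (forall x, 0 < g x) -> a < b ->
  0 < RInt g a b.
Proof. intros H P ab; apply RInt_gt_0; auto; intros; apply cont_c, H. Qed.

Lemma RInt_nn (g : R -> R) a b : continuity g -> (forall x, 0 < g x) -> a <= b ->
  0 <= RInt g a b.
Proof. intros H P ab; destruct ab as [ab|ab].
  left; apply RInt_pos; auto. subst; rewrite RInt_point; right; reflexivity. Qed.

Lemma G_deriv (g : R -> R) x : continuity g ->
  derivable_pt_lim (fun y => RInt g 0 y) x (g x).
Proof. intros H; apply is_derive_Reals. apply (is_derive_RInt (V:=R_NormedModule) g _ 0).
  apply filter_forall; intros y; apply (RInt_correct (V:=R_CompleteNormedModule)); apply exR, H.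
  apply cont_c, H. Qed.

Lemma RInt_ub (g : R -> R) a b c : continuity g -> a <= b ->
  (forall x, a <= x <= b -> g x <= c) -> RInt g a b <= (b - a) * c.
Proof. intros H ab Hc.
  replace ((b-a)*c) with (RInt (fun _ => c) a b).
  apply RInt_le; auto. apply exR, H. apply ex_RInt_const.
  intros; apply Hc; lra. rewrite RInt_const; reflexivity. Qed.

Lemma RInt_lb (g : R -> R) a b c : continuity g -> a <= b ->
  (forall x, a <= x <= b -> c <= g x) -> (b - a) * c <= RInt g a b.
Proof. intros H ab Hc.
  replace ((b-a)*c) with (RInt (fun _ => c) a b).
  apply RInt_le; auto. apply ex_RInt_const. apply exR, H. 
  intros; apply Hc; lra. rewrite RInt_const; reflexivity. Qed.

Lemma mono_deriv (F dF : R -> R) a b : a <= b ->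
  (forall x, a < x < b -> derivable_pt_lim F x (dF x)) ->
  (forall x, a <= x <= b -> continuity_pt F x) ->
  (forall x, a < x < b -> dF x <= 0) -> F b <= F a.
Proof.
  intros ab HD HC Hn. destruct ab as [ab|ab]; [|subst; lra].
  assert (pr1 : forall c, a < c < b -> derivable_pt F c).
  { intros c Hc; exists (dF c); apply HD; auto. }
  assert (pr2 : forall c, a < c < b -> derivable_pt id c).
  { intros c Hc; apply derivable_pt_id. }
  destruct (MVT F id a b pr1 pr2 ab HC) as [c [P E]].
  { intros; apply derivable_continuous_pt, derivable_pt_id. }
  rewrite (derive_pt_eq_0 F c (dF c) (pr1 c P) (HD c P)) in E.
  rewrite (derive_pt_eq_0 id c 1 (pr2 c P) (derivable_pt_lim_id c)) in E.
  unfold id in E. specialize (Hn c P). nra.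
Qed.

Lemma cpt_eps (F : R -> R) x : continuity_pt F x <->
  (forall eps, eps > 0 -> exists d, d > 0 /\ forall y, Rabs (y - x) < d -> Rabs (F y - F x) < eps).
Proof.
  unfold continuity_pt, continue_in, limit1_in, limit_in; simpl; unfold R_dist, D_x, no_cond.
  split.
  - intros H eps He; destruct (H eps He) as [d [Hd H']]; exists d; split; auto.
    intros y Hy; destruct (Req_dec y x) as [->|ne].
    + unfold Rminus; rewrite Rplus_opp_r, Rabs_R0; lra.
    + apply H'; split; auto.
  - intros H eps He; destruct (H eps He) as [d [Hd H']]; exists d; split; auto.
    intros y [_ Hy]; apply H'; auto.
Qed.

Section U.
Variable g : R -> R.
Hypothesis gc : continuity g.
Hypothesis gp : forall x, 0 < g x.
Let G := fun x => RInt g 0 x.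

Lemma G_diff x y : G y - G x = RInt g x y.
Proof. unfold G; rewrite <- (chas g 0 x y gc); ring. Qed.

Lemma G_le x y : x <= y -> G x <= G y.
Proof. intros; assert (0 <= RInt g x y) by (apply RInt_nn; auto).
  rewrite <- G_diff in H0; lra. Qed.

Lemma G_lt x y : x < y -> G x < G y.
Proof. intros; assert (0 < RInt g x y) by (apply RInt_pos; auto).
  rewrite <- G_diff in H0; lra. Qed.

Lemma G_cont x : continuity_pt G x.
Proof. apply derivable_continuous_pt. exists (g x). apply G_deriv; auto. Qed.

Variable u : R -> R.
Hypothesis uG : forall s, 0 <= s -> G (u s) = G s - 1.

Lemma u_cont_eps s0 : 0 < s0 -> forall eps, eps > 0 -> exists d, d > 0 /\
   forall s, Rabs (s - s0) < d -> Rabs (u s - u s0) < eps.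
Proof.
  intros s0p eps He. set (a := u s0).
  set (d0 := Rmin (G (a+eps) - G a) (G a - G (a - eps))).
  assert (d0p : d0 > 0).
  { unfold d0; apply Rmin_glb_lt; [assert (G a < G (a+eps)) by (apply G_lt; lra)|
      assert (G (a-eps) < G a) by (apply G_lt; lra)]; lra. }
  destruct (proj1 (cpt_eps G s0) (G_cont s0) d0 d0p) as [d [dp Hd]].
  exists (Rmin d s0); split. apply Rmin_glb_lt; lra.
  intros s Hs. assert (Hs1 : Rabs (s - s0) < d) by (eapply Rlt_le_trans; [apply Hs|apply Rmin_l]).
  assert (Hs2 : Rabs (s - s0) < s0) by (eapply Rlt_le_trans; [apply Hs|apply Rmin_r]).
  assert (s0' : 0 <= s).
  { destruct (Rabs_def2 _ _ Hs2); lra. }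
  specialize (Hd s Hs1).
  replace (G s - G s0) with (G (u s) - G a) in Hd by (rewrite uG by auto; unfold a; rewrite uG by lra; ring).
  apply Rabs_def1.
  - destruct (Rlt_or_le (u s - a) eps) as [h|h]; auto.
    assert (G (a+eps) <= G (u s)) by (apply G_le; lra).
    assert (d0 <= G (a+eps) - G a) by apply Rmin_l.
    destruct (Rabs_def2 _ _ Hd); lra.
  - destruct (Rlt_or_le (-eps) (u s - a)) as [h|h]; auto.
    assert (G (u s) <= G (a-eps)) by (apply G_le; lra).
    assert (d0 <= G a - G (a-eps)) by apply Rmin_r.
    destruct (Rabs_def2 _ _ Hd); lra.
Qed.

Lemma u_cont s0 : 0 < s0 -> continuity_pt u s0.
Proof. intros; apply cpt_eps; apply u_cont_eps; auto. Qed.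

End U.

Lemma dlim_lin (F : R -> R) x l : derivable_pt_lim F x l ->
  forall eta, eta > 0 -> exists d, d > 0 /\ forall k, Rabs k < d ->
    Rabs (F (x + k) - F x - l * k) <= eta * Rabs k.
Proof.
  intros H eta He. destruct (H eta He) as [d Hd]. exists d; split; [apply cond_pos|].
  intros k Hk. destruct (Req_dec k 0) as [->|nk].
  - rewrite Rplus_0_r, Rabs_R0. replace (F x - F x - l * 0) with 0 by ring. rewrite Rabs_R0; lra.
  - specialize (Hd k nk Hk).
    replace (F (x + k) - F x - l * k) with (((F (x+k) - F x)/k - l) * k) by (field; auto).
    rewrite Rabs_mult. apply Rmult_le_compat_r; [apply Rabs_pos|lra].
Qed.

Section U2.
Variable g : R -> R.
Hypothesis gc : continuity g.
Hypothesis gp : forall x, 0 < g x.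
Variable u : R -> R.
Hypothesis uG : forall s, 0 <= s -> RInt g 0 (u s) = RInt g 0 s - 1.

Lemma key_ineq ga gs eps eta K H D : ga > 0 -> gs > 0 -> eps > 0 -> H > 0 -> K >= 0 ->
  eta > 0 -> eta <= ga / 2 -> eta <= 1 ->
  eta <= eps / (2 * ((2 * (gs + 1) / ga + 1) / ga)) ->
  D <= eta * K + eta * H -> ga * K <= gs * H + D -> D < eps * ga * H.
Proof.
  intros. set (C := (2 * (gs + 1) / ga + 1) / ga) in *.
  assert (Cp : C > 0) by (unfold C; apply Rdiv_lt_0_compat; [|lra];
    assert (0 < 2 * (gs+1) / ga) by (apply Rdiv_lt_0_compat; lra); lra).
  assert (HK : K <= 2 * (gs + 1) * H / ga).
  { apply (Rmult_le_reg_l ga); auto. field_simplify; [|lra]. nra. }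
  assert (D <= eta * C * ga * H).
  { unfold C. replace (eta * ((2 * (gs + 1) / ga + 1) / ga) * ga * H) with
      (eta * (2 * (gs + 1) * H / ga) + eta * H) by (field; lra). nra. }
  assert (eta * C <= eps / 2).
  { replace (eps/2) with (eps / (2*C) * C) by (field; lra). nra. }
  assert (eta * C * (ga * H) <= eps / 2 * (ga * H)) by (apply Rmult_le_compat_r; nra).
  assert (0 < ga * H) by nra. nra.
Qed.

Lemma u_deriv s0 : 0 < s0 -> derivable_pt_lim u s0 (g s0 / g (u s0)).
Proof.
  intros s0p eps epsp. set (a := u s0). set (ga := g a). set (gs := g s0).
  assert (gap : ga > 0) by apply gp. assert (gsp : gs > 0) by apply gp.
  set (C := (2 * (gs + 1) / ga + 1) / ga).
  assert (Cp : C > 0) by (unfold C; apply Rdiv_lt_0_compat; [|lra];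
    assert (0 < 2 * (gs+1) / ga) by (apply Rdiv_lt_0_compat; lra); lra).
  set (eta := Rmin (Rmin (ga/2) 1) (eps / (2 * C))).
  assert (etap : eta > 0).
  { unfold eta; apply Rmin_glb_lt; [apply Rmin_glb_lt; lra|apply Rdiv_lt_0_compat; lra]. }
  assert (e1 : eta <= ga/2) by (unfold eta; eapply Rle_trans; [apply Rmin_l|apply Rmin_l]).
  assert (e2 : eta <= 1) by (unfold eta; eapply Rle_trans; [apply Rmin_l|apply Rmin_r]).
  assert (e3 : eta <= eps / (2*C)) by (unfold eta; apply Rmin_r).
  destruct (dlim_lin _ a _ (G_deriv g a gc) eta etap) as [d1 [d1p H1]].
  destruct (dlim_lin _ s0 _ (G_deriv g s0 gc) eta etap) as [d2 [d2p H2]].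
  destruct (u_cont_eps g gc gp u uG s0 s0p d1 d1p) as [d3 [d3p H3]].
  assert (dp : 0 < Rmin d2 (Rmin d3 s0)) by (repeat apply Rmin_glb_lt; lra).
  exists (mkposreal _ dp). intros h hn hd; simpl in hd.
  assert (hd2 : Rabs h < d2) by (eapply Rlt_le_trans; [apply hd|apply Rmin_l]).
  assert (hd3 : Rabs h < d3) by (eapply Rlt_le_trans; [apply hd|eapply Rle_trans;[apply Rmin_r|apply Rmin_l]]).
  assert (hd4 : Rabs h < s0) by (eapply Rlt_le_trans; [apply hd|eapply Rle_trans;[apply Rmin_r|apply Rmin_r]]).
  assert (s1 : 0 <= s0 + h) by (destruct (Rabs_def2 _ _ hd4); lra).
  set (k := u (s0 + h) - a).
  assert (kd : Rabs k < d1) by (apply H3; replace (s0 + h - s0) with h by ring; auto).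
  specialize (H1 k kd). specialize (H2 h hd2).
  replace (a + k) with (u (s0 + h)) in H1 by (unfold k; ring).
  rewrite (uG (s0+h) s1) in H1. unfold a in H1. rewrite (uG s0 (Rlt_le _ _ s0p)) in H1.
  fold a ga in H1. fold gs in H2.
  assert (HD : Rabs (ga * k - gs * h) <= eta * Rabs k + eta * Rabs h).
  { replace (ga * k - gs * h) with (- (RInt g 0 (s0 + h) - 1 - (RInt g 0 s0 - 1) - ga * k)
       + (RInt g 0 (s0 + h) - RInt g 0 s0 - gs * h)) by ring.
    eapply Rle_trans; [apply Rabs_triang|]. rewrite Rabs_Ropp; lra. }
  assert (HK : ga * Rabs k <= gs * Rabs h + Rabs (ga * k - gs * h)).
  { replace (ga * Rabs k) with (Rabs (ga * k)) by (rewrite Rabs_mult, Rabs_right; lra).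
    replace (ga * k) with ((ga*k - gs*h) + gs * h) at 1 by ring.
    eapply Rle_trans; [apply Rabs_triang|]. rewrite Rabs_mult, (Rabs_right gs); lra. }
  assert (Hp : Rabs h > 0) by (apply Rabs_pos_lt; auto).
  pose proof (key_ineq ga gs eps eta (Rabs k) (Rabs h) _ gap gsp epsp Hp
     (Rle_ge _ _ (Rabs_pos k)) etap e1 e2 e3 HD HK) as KI.
  assert (EQ : forall ga gs du h, ga <> 0 -> h <> 0 -> du/h - gs/ga = (ga*du - gs*h)/(ga*h))
    by (intros; field; auto).
  rewrite EQ by lra. fold a. fold ga gs. fold k.
  rewrite Rabs_div, Rabs_mult, (Rabs_right ga) by (try lra; apply Rmult_integral_contrapositive; split; lra).
  apply (Rmult_lt_reg_r (ga * Rabs h)). nra. unfold Rdiv. rewrite Rmult_assoc, Rinv_l. lra.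
  apply Rmult_integral_contrapositive; lra.
Qed.

End U2.

Lemma cexp c : continuity (fun w => exp (c*w)).
Proof. intros w. reg. Qed.
Lemma cprod (A : R -> R) c : continuity A -> continuity (fun w => exp (c*w) * A w).
Proof. intros H. apply (continuity_mult (fun w => exp (c*w)) A); [apply cexp|auto]. Qed.

Lemma D1 (A : R -> R) mu w d : derivable_pt_lim A w d ->
  derivable_pt_lim (fun w => exp(mu*w)*A w) w (exp(mu*w)*(mu*A w + d)).
Proof. intros H. apply is_derive_Reals in H. apply is_derive_Reals.
  evar (l : R). replace (exp(mu*w)*(mu*A w + d)) with l. 
  apply (is_derive_mult (fun w => exp (mu*w)) A). 2: exact H.
  apply (is_derive_comp exp (fun w => mu * w)). apply is_derive_Reals, derivable_pt_lim_exp.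
  auto_derive; auto. intros; apply Rmult_comm.
  unfold l; simpl. unfold plus, scal, mult; simpl; unfold plus, mult; simpl. ring. Qed.

Lemma D2 (u : R -> R) a b s du : derivable_pt_lim u s du ->
  derivable_pt_lim (fun s => exp(a*s + b*u s)) s (exp(a*s + b*u s)*(a + b*du)).
Proof. intros H. apply is_derive_Reals in H. apply is_derive_Reals.
  evar (l : R). replace (exp(a*s + b*u s)*(a + b*du)) with l. 
  apply (is_derive_comp exp (fun s => a*s + b*u s)). apply is_derive_Reals, derivable_pt_lim_exp.
  apply (is_derive_plus (fun s => a*s) (fun s => b * u s)). auto_derive; auto.
  apply (is_derive_scal u). exact H.
  unfold l; simpl. unfold plus, scal, mult; simpl; unfold plus, mult; simpl. ring. Qed.

Lemma D3 (F E : R -> R) K s dF dE : derivable_pt_lim F s dF -> derivable_pt_lim E s dE ->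
  derivable_pt_lim (fun s => F s - K * E s) s (dF - K * dE).
Proof. intros H1 H2. apply is_derive_Reals in H1. apply is_derive_Reals in H2. apply is_derive_Reals.
  apply (is_derive_minus F (fun s => K * E s)). auto. apply (is_derive_scal E). auto. Qed.

Section Species.
Variables (A g f tau : R -> R) (mu muJ beta zeta tau0 : R).
Hypotheses (mup : mu > 0) (muJp : muJ > 0) (betap : beta > 0) (zetap : zeta > 0) (tau0p : tau0 >= 0).
Hypotheses (Ac : continuity A) (An : forall t, 0 <= A t).
Hypothesis fdec : forall x y, x <= y -> f y <= f x.
Hypothesis flim : forall eps, eps > 0 -> exists X, forall x, x >= X -> f x < eps.
Hypotheses (gc : continuity g) (gp : forall x, 0 < g x) (gle : forall s, g s <= f (zeta * A s)).
Hypothesis taun : forall t, 0 <= t -> 0 <= tau t.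
Hypothesis Ad : forall t, 0 < t -> derivable_pt_lim A t
   (- mu * A t + beta * exp (- muJ * tau t) * (g t / g (t - tau t)) * A (t - tau t)).
Hypothesis cons : forall t, 0 <= t -> RInt g (t - tau t) t = 1.
Hypothesis init : RInt g (- tau0) 0 = 1.

Let u t := t - tau t.

Lemma uG s : 0 <= s -> RInt g 0 (u s) = RInt g 0 s - 1.
Proof. intros; pose proof (chas g 0 (u s) s gc) as E. unfold u in *; rewrite cons in E by auto.
  change (RInt g 0 (s - tau s) + 1 = RInt g 0 s) in E. lra. Qed.

Lemma u_range s : 0 <= s -> - tau0 <= u s <= s.
Proof. intros Hs; split; [|unfold u; specialize (taun s Hs); lra].
  destruct (Rle_or_lt (-tau0) (u s)) as [h|h]; auto; exfalso.
  assert (E : RInt g (u s) (-tau0) + (RInt g (-tau0) 0 + RInt g 0 s) = 1).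
  { rewrite (chas g (-tau0) 0 s gc), (chas g (u s) (-tau0) s gc). unfold u; apply cons; auto. }
  assert (0 < RInt g (u s) (-tau0)) by (apply RInt_pos; auto).
  assert (0 <= RInt g 0 s) by (apply RInt_nn; auto). lra.
Qed.

Lemma birth_nn t : 0 < t -> 0 <= beta * exp (- muJ * tau t) * (g t / g (t - tau t)) * A (t - tau t).
Proof. intros. apply Rmult_le_pos; [|auto]. apply Rmult_le_pos; [apply Rmult_le_pos; [lra|left; apply exp_pos]|].
  apply Rlt_le, Rdiv_lt_0_compat; auto. Qed.

Lemma growth x y : 0 <= x <= y -> A x * exp (- mu * (y - x)) <= A y.
Proof.
  intros Hxy.
  assert (M : - (exp (mu * y) * A y) <= - (exp (mu * x) * A x)).
  { apply (mono_deriv (fun w => - (exp (mu * w) * A w))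
      (fun w => - (exp (mu * w) * (mu * A w + (- mu * A w + beta * exp (- muJ * tau w) * (g w / g (w - tau w)) * A (w - tau w)))))).
    - lra.
    - intros w Hw. apply derivable_pt_lim_opp. apply D1. apply Ad; lra.
    - intros w Hw. apply (continuity_pt_opp (fun w => exp (mu * w) * A w)). apply cprod; auto.
    - intros w Hw. assert (0 < exp (mu*w)) by apply exp_pos.
      pose proof (birth_nn w ltac:(lra)). nra. }
  replace (exp (- mu * (y - x))) with (exp (mu * x) / exp (mu * y)).
  - apply (Rmult_le_reg_r (exp (mu * y))). apply exp_pos.
    unfold Rdiv. replace (A x * (exp (mu * x) * / exp (mu * y)) * exp (mu * y)) with (exp (mu * x) * A x).
    lra. field. apply Rgt_not_eq, exp_pos.
  - replace (- mu * (y - x)) with (mu * x + - (mu * y)) by ring.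
    rewrite exp_plus, exp_Ropp. reflexivity.
Qed.


Lemma exp_le x y : x <= y -> exp x <= exp y.
Proof. intros [h|h]; [left; apply exp_increasing; auto|subst; lra]. Qed.

Lemma tau_big C0 Ds X a1 : (forall x, -tau0 <= x <= 1 -> A x <= C0) ->
  Ds > 0 -> (forall x, x >= X -> f x < 1 / Ds) -> a1 > C0 ->
  zeta * (a1 * exp (- mu * Ds)) >= X ->
  forall s, 0 < s -> A (u s) > a1 -> Ds <= tau s.
Proof.
  intros HC0 Dsp HX Ha1 HaX s sp Hu.
  assert (0 <= C0) by (specialize (HC0 0 ltac:(lra)); specialize (An 0); lra).
  destruct (u_range s) as [r1 r2]; [lra|].
  assert (u1 : 1 < u s).
  { destruct (Rlt_or_le 1 (u s)) as [h|h]; auto. specialize (HC0 (u s) ltac:(lra)); lra. }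
  destruct (Rle_or_lt Ds (tau s)) as [h|h]; auto. exfalso.
  assert (Hw : forall w, u s <= w <= s -> g w <= f X).
  { intros w Hw. eapply Rle_trans; [apply gle|]. apply fdec.
    assert (Hg : A (u s) * exp (- mu * (w - u s)) <= A w) by (apply growth; lra).
    assert (He : exp (- mu * Ds) <= exp (- mu * (w - u s))).
    { apply exp_le. unfold u in *. nra. }
    assert (a1 * exp (- mu * Ds) <= A w).
    { eapply Rle_trans; [|apply Hg]. apply Rmult_le_compat; try lra; try (left; apply exp_pos). }
    nra. }
  pose proof (RInt_ub g (u s) s (f X) gc r2 Hw) as HI.
  unfold u in HI at 1. rewrite cons in HI by lra.
  assert (fXp : 0 < f X) by (specialize (Hw s ltac:(lra)); specialize (gp s); lra).
  specialize (HX X (Rge_refl X)).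
  assert (tau s * f X < 1).
  { apply (Rle_lt_trans _ (Ds * f X)). apply Rmult_le_compat_r; lra.
    replace 1 with (Ds * (1/Ds)) by (field; lra). apply Rmult_lt_compat_l; lra. }
  unfold u in HI. replace (s - (s - tau s)) with (tau s) in HI by ring. lra.
Qed.


Lemma step_bound C0 a1 Ds ep m' M T t :
  (forall x, -tau0 <= x <= 1 -> A x <= C0) ->
  0 < m' -> m' <= mu -> m' <= muJ / 2 -> 0 < Ds ->
  beta * exp (- (muJ / 2) * Ds) <= ep -> 0 <= ep -> 0 <= a1 ->
  (forall s, 0 < s -> A (u s) > a1 -> Ds <= tau s) ->
  (forall x, -tau0 <= x <= T -> A x <= M) ->
  0 < t <= T -> A t <= C0 + (beta * a1 + ep * M) / m'.
Proof.
  intros HC0 m'p m1 m2 Dsp FDs epp a1p tb HM Ht.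
  assert (Mp : 0 <= M) by (specialize (HM t ltac:(lra)); specialize (An t); lra).
  set (K := beta * a1 + ep * M).
  assert (Kp : 0 <= K) by (unfold K; nra).
  set (d := Rmin 1 t / 2).
  assert (dp : 0 < d /\ d < t /\ d <= 1).
  { unfold d; assert (Rmin 1 t <= 1) by apply Rmin_l; assert (Rmin 1 t <= t) by apply Rmin_r;
    assert (0 < Rmin 1 t) by (apply Rmin_glb_lt; lra); lra. }
  set (Ap := fun s => - mu * A s + beta * exp (- muJ * tau s) * (g s / g (s - tau s)) * A (s - tau s)).
  set (dP := fun s => exp (mu * s) * (mu * A s + Ap s) - K / m' *
      (exp ((mu - m') * s + m' * u s) * ((mu - m') + m' * (g s / g (u s))))).
  assert (HD : forall s, 0 < s -> derivable_pt_lim (fun s => exp (mu * s) * A s - K / m' * exp ((mu - m') * s + m' * u s)) s (dP s)).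
  { intros s sp. unfold dP. apply D3. apply D1. apply Ad; auto.
    apply D2. apply (u_deriv g gc gp u uG s sp). }
  assert (Mn := mono_deriv (fun s => exp (mu * s) * A s - K / m' * exp ((mu - m') * s + m' * u s)) dP d t).
  simpl in Mn. assert (Hle : exp (mu * t) * A t - K / m' * exp ((mu - m') * t + m' * u t) <=
     exp (mu * d) * A d - K / m' * exp ((mu - m') * d + m' * u d)).
  { apply Mn. lra. intros x Hx; apply HD; lra.
    intros x Hx. apply derivable_continuous_pt. exists (dP x). apply HD; lra.
    intros s Hs. assert (sp : 0 < s) by lra.
    set (ta := tau s). set (Au := A (u s)). set (E := exp (mu * s)). set (r := g s / g (u s)).
    set (w1 := exp (- (muJ - m') * ta)).
    assert (rp : 0 < r) by (apply Rdiv_lt_0_compat; auto).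
    assert (tap : 0 <= ta) by (apply taun; lra).
    assert (Ep : 0 < E) by apply exp_pos.
    assert (e1 : exp ((mu - m') * s + m' * u s) = E * exp (- m' * ta)).
    { unfold E, ta, u. rewrite <- exp_plus. f_equal; ring. }
    assert (e2 : exp (- muJ * ta) = exp (- m' * ta) * w1).
    { unfold w1. rewrite <- exp_plus. f_equal; ring. }
    assert (key : beta * w1 * Au <= K).
    { assert (Aup : 0 <= Au) by apply An.
      destruct (Rle_or_lt Au a1) as [h|h].
      - assert (w1 <= 1) by (unfold w1; rewrite <- exp_0; apply exp_le; nra).
        assert (0 < w1) by apply exp_pos. assert (w1 * Au <= a1) by nra.
        unfold K. assert (0 <= ep * M) by nra.
        assert (beta * (w1 * Au) <= beta * a1) by (apply Rmult_le_compat_l; lra). nra.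
      - assert (Dt : Ds <= ta) by (apply tb; auto).
        assert (w1 <= exp (- (muJ / 2) * Ds)) by (unfold w1; apply exp_le; nra).
        assert (Au <= M).
        { apply HM. destruct (u_range s) as [r1 r2]; lra. }
        assert (0 < w1) by apply exp_pos.
        unfold K. assert (beta * w1 <= ep) by nra. nra. }
    assert (EQ : dP s = E * exp (- m' * ta) * (r * (beta * w1 * Au - K) - K / m' * (mu - m'))).
    { unfold dP, Ap. rewrite e1. fold ta E. rewrite e2. change (A (s - ta)) with Au. change (g s / g (s - ta)) with r. change (g s / g (u s)) with r. clearbody E Au r w1 ta K. clear - m'p. field. lra. }
    rewrite EQ. assert (0 < exp (- m' * ta)) by apply exp_pos.
    assert (0 <= K / m' * (mu - m')) by (apply Rmult_le_pos; [apply Rdiv_le_0_compat|]; lra).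
    assert (r * (beta * w1 * Au - K) <= r * 0) by (apply Rmult_le_compat_l; lra).
    assert (0 < E * exp (- m' * ta)) by (apply Rmult_lt_0_compat; lra).
    assert (E * exp (- m' * ta) * (r * (beta * w1 * Au - K) - K / m' * (mu - m')) <= E * exp (- m' * ta) * 0) by (apply Rmult_le_compat_l; lra). lra. }
  assert (Ad0 : A d <= C0) by (apply HC0; lra).
  assert (0 < exp ((mu - m') * d + m' * u d)) by apply exp_pos.
  assert (E1 : exp ((mu - m') * t + m' * u t) <= exp (mu * t)).
  { apply exp_le. destruct (u_range t) as [r1 r2]; [lra|]. assert (m' * u t <= m' * t) by (apply Rmult_le_compat_l; lra); lra. }
  assert (E2 : exp (mu * d) <= exp (mu * t)) by (apply exp_le; nra).
  assert (Etp : 0 < exp (mu * t)) by apply exp_pos.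
  assert (0 <= K / m') by (apply Rdiv_le_0_compat; lra).
  assert (exp (mu * t) * A t <= exp (mu * t) * (C0 + K / m')).
  { assert (0 <= A d) by apply An. assert (0 <= C0) by (specialize (HC0 0 ltac:(lra)); specialize (An 0); lra).
    assert (exp (mu * d) * A d <= exp (mu * t) * C0) by (apply Rmult_le_compat; try lra; left; apply exp_pos).
    assert (K / m' * exp ((mu - m') * t + m' * u t) <= K / m' * exp (mu * t)) by (apply Rmult_le_compat_l; lra).
    assert (0 <= K / m' * exp ((mu - m') * d + m' * u d)) by nra. nra. }
  unfold Rdiv. fold K. apply (Rmult_le_reg_l (exp (mu * t))); auto.
Qed.


Lemma bounded : exists B, forall t, 0 <= t -> A t <= B.
Proof.
  destruct (continuity_ab_maj A (-tau0) 1) as [xm [Hxm Hr]]; [lra|intros; apply Ac|].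
  set (C0 := A xm). assert (C0p : 0 <= C0) by apply An.
  set (m' := Rmin mu (muJ/2)).
  assert (m'p : 0 < m') by (apply Rmin_glb_lt; lra).
  assert (m1 : m' <= mu) by apply Rmin_l. assert (m2 : m' <= muJ/2) by apply Rmin_r.
  set (ep := m'/2). assert (epp : 0 < ep) by (unfold ep; lra).
  set (Ds := Rmax 1 (2/muJ * ln (beta/ep))).
  assert (Ds1 : 1 <= Ds) by apply Rmax_l.
  assert (Ds2 : 2/muJ * ln (beta/ep) <= Ds) by apply Rmax_r.
  assert (FDs : beta * exp (- (muJ / 2) * Ds) <= ep).
  { assert (L : ln (beta/ep) <= muJ / 2 * Ds).
    { replace (ln (beta/ep)) with (muJ/2 * (2/muJ * ln (beta/ep))) by (field; lra).
      apply Rmult_le_compat_l; lra. }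
    assert (exp (- (muJ / 2) * Ds) <= exp (- ln (beta/ep))) by (apply exp_le; lra).
    rewrite exp_Ropp, exp_ln in H by (apply Rdiv_lt_0_compat; lra).
    replace (/ (beta / ep)) with (ep / beta) in H by (field; lra).
    apply (Rmult_le_compat_l beta) in H; [|lra].
    replace (beta * (ep / beta)) with ep in H by (field; lra). lra. }
  destruct (flim (1/Ds)) as [X HX]. { apply Rdiv_lt_0_compat; lra. }
  set (a1 := Rmax (C0+1) (X * exp (mu*Ds) / zeta)).
  assert (a11 : C0 + 1 <= a1) by apply Rmax_l.
  assert (a12 : X * exp (mu*Ds) / zeta <= a1) by apply Rmax_r.
  assert (HaX : zeta * (a1 * exp (- mu * Ds)) >= X).
  { assert (E : exp (mu * Ds) * exp (- mu * Ds) = 1).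
    { rewrite <- exp_plus. replace (mu * Ds + - mu * Ds) with 0 by ring. apply exp_0. }
    assert (Ep : 0 < exp (- mu * Ds)) by apply exp_pos.
    assert (zeta * (X * exp (mu * Ds) / zeta) * exp (- mu * Ds) <= zeta * a1 * exp (- mu * Ds)).
    { apply Rmult_le_compat_r; [lra|]. apply Rmult_le_compat_l; lra. }
    replace (zeta * (X * exp (mu * Ds) / zeta) * exp (- mu * Ds)) with X in H.
    lra. field_simplify; [|lra]. rewrite Rmult_assoc, E. ring. }
  assert (HC0 : forall x, -tau0 <= x <= 1 -> A x <= C0) by (intros; apply Hxm; auto).
  assert (tb := tau_big C0 Ds X a1 HC0 ltac:(lra) HX ltac:(lra) HaX).
  exists (2 * C0 + 2 * (beta * a1) / m'). intros t tp.
  destruct (continuity_ab_maj A (-tau0) (Rmax t 1)) as [xT [HrT HxT]].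
  { assert (1 <= Rmax t 1) by apply Rmax_r; lra. } { intros; apply Ac. }
  assert (Q : 0 <= 2 * (beta * a1) / m') by (apply Rdiv_le_0_compat; nra).
  assert (MB : A xT <= 2 * C0 + 2 * (beta * a1) / m').
  { destruct (Rle_or_lt xT 1) as [h|h].
    - assert (A xT <= C0) by (apply HC0; lra). lra.
    - assert (S := step_bound C0 a1 Ds ep m' (A xT) (Rmax t 1) xT HC0 m'p m1 m2 ltac:(lra) FDs
        ltac:(lra) ltac:(lra) tb ltac:(intros; apply HrT; auto) ltac:(lra)).
      replace ((beta * a1 + ep * A xT) / m') with (beta * a1 / m' + A xT / 2) in S by (unfold ep; field; lra).
      replace (2 * (beta * a1) / m') with (2 * (beta * a1 / m')) by (field; lra). lra. }
  assert (A t <= A xT) by (apply HrT; split; [lra|apply Rmax_l]). lra.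
Qed.

End Species.

Lemma deriv_conv (A : R -> R) t l : 0 < t -> deriv_nonneg A t l -> derivable_pt_lim A t l.
Proof.
  intros tp H eps ep. destruct (H eps ep) as [d [dp Hd]].
  assert (mp : 0 < Rmin d t) by (apply Rmin_glb_lt; lra).
  exists (mkposreal _ mp). intros h hn hl; simpl in hl.
  assert (Rabs h < d) by (eapply Rlt_le_trans; [apply hl|apply Rmin_l]).
  assert (Rabs h < t) by (eapply Rlt_le_trans; [apply hl|apply Rmin_r]).
  apply Hd; auto. destruct (Rabs_def2 _ _ H1); lra.
Qed.

Lemma sum_ext (g1 g2 : nat -> R) m : (forall k, (k < m)%nat -> g1 k = g2 k) -> sumR m g1 = sumR m g2.
Proof. induction m; simpl; intros H; auto. rewrite IHm by (intros; apply H; lia). rewrite H by lia; auto. Qed.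

Lemma sum_cont (F : nat -> R -> R) m : (forall k, (k < m)%nat -> continuity (F k)) ->
  continuity (fun t => sumR m (fun k => F k t)).
Proof. induction m; simpl; intros H.
  - apply continuity_const; intros ? ?; auto.
  - apply (continuity_plus (fun t => sumR m (fun k => F k t)) (F m)). apply IHm; intros; apply H; lia. apply H; lia. Qed.

Lemma sum_ge (F : nat -> R) m j : (forall k, (k < m)%nat -> 0 <= F k) -> (j < m)%nat -> F j <= sumR m F.
Proof. induction m; simpl; intros H Hj. lia.
  assert (0 <= sumR m F).
  { clear IHm Hj. induction m; simpl. lra. assert (0 <= F m) by (apply H; lia).
    assert (0 <= sumR m F) by (apply IHm; intros; apply H; lia). lra. }
  destruct (Nat.eq_dec j m) as [->|ne]. lra.
  assert (F j <= sumR m F) by (apply IHm; [intros; apply H; lia|lia]).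
  assert (0 <= F m) by (apply H; lia). lra.
Qed.

Lemma sum_bound (F : nat -> R -> R) m : (forall k, (k < m)%nat -> exists B, forall t, 0 <= t -> F k t <= B) ->
  exists B, forall t, 0 <= t -> sumR m (fun k => F k t) <= B.
Proof. induction m; simpl; intros H.
  - exists 0; intros; lra.
  - destruct IHm as [B1 H1]. intros; apply H; lia. destruct (H m) as [B2 H2]. lia.
    exists (B1 + B2); intros t tp. specialize (H1 t tp); specialize (H2 t tp); lra.
Qed.

Lemma fdec_of (f f' : R -> R) : (forall x, derivable_pt_lim f x (f' x)) -> (forall x, f' x <= 0) ->
  forall x y, x <= y -> f y <= f x.
Proof. intros H1 H2 x y xy. apply (mono_deriv f f').
  - exact xy. - intros z _; apply H1.
  - intros z _; apply derivable_continuous_pt; exists (f' z); apply H1.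
  - intros z _; apply H2. Qed.

Lemma fcont (f f' : R -> R) : (forall x, derivable_pt_lim f x (f' x)) -> continuity f.
Proof. intros H x. apply derivable_continuous_pt; exists (f' x); apply H. Qed.

Lemma RInt_eq1 (g : R -> R) a b v : integral_eq g a b v -> RInt g a b = v.
Proof. intros [pr E]. rewrite (RInt_Reals g a b pr); auto. Qed.

Theorem lemma3p3 (n : nat) (alpha : R) (muA muJ beta : nat -> R)
  (zeta : nat -> nat -> R) (f : nat -> R -> R) (phi : nat -> R -> R)
  (tau0 : nat -> R) (A : nat -> R -> R) (tau : nat -> R -> R) :
  alpha > 0 ->
  AssumptionA n muA muJ beta zeta f ->
  (forall i, (i < n)%nat -> X_alpha alpha (phi i) /\ (forall s, s <= 0 -> 0 <= phi i s)) ->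
  is_solution n muA muJ beta zeta f phi tau0 A tau ->
  (forall i, (i < n)%nat ->
     integral_eq (fun s => f i (Zfun n zeta phi i s)) (- tau0 i) 0 1) ->
  forall i, (i < n)%nat -> exists t, t > 0 /\ t - tau i t = 0.
Proof.
  intros alp HA Hphi Hsol Hint.
  assert (Acont : forall k, (k < n)%nat -> continuity (A k)) by (intros k hk; apply (Hsol k hk)).
  assert (Apos : forall k, (k < n)%nat -> forall t, 0 <= A k t) by (intros k hk; apply (Hsol k hk)).
  assert (Zc : forall j, continuity (Zfun n zeta A j)).
  { intros j. unfold Zfun. apply (sum_cont (fun k t => zeta j k * A k t)).
    intros k hk. apply (continuity_scal (A k)). auto. }
  assert (SP : forall j, (j < n)%nat ->
     (forall x y, x <= y -> f j y <= f j x) /\ continuity (f j) /\ (forall x, 0 < f j x) /\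
     continuity (fun s => f j (Zfun n zeta A j s)) /\
     (forall t, 0 <= t -> RInt (fun s => f j (Zfun n zeta A j s)) (t - tau j t) t = 1)).
  { intros j hj. destruct (HA j hj) as (m1 & m2 & m3 & m4 & m5 & m6 & [f' [Df [_ Nf]]] & fp & _).
    assert (fd := fdec_of (f j) f' Df Nf). assert (fc := fcont (f j) f' Df).
    split; auto. split; auto. split; [intros; apply Rgt_lt, fp|]. split.
    { intros x. apply (continuity_pt_comp (Zfun n zeta A j) (f j)); [apply Zc|apply fc]. }
    intros t tp. destruct (Hsol j hj) as (_ & _ & _ & _ & _ & _ & _ & Hc).
    destruct (Hc t tp) as [v [I1 I2]].
    apply RInt_eq1 in I1. apply RInt_eq1 in I2. rewrite (RInt_eq1 _ _ _ _ (Hint j hj)) in I2.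
    congruence. }
  assert (Bnd : forall j, (j < n)%nat -> exists B, forall t, 0 <= t -> A j t <= B).
  { intros j hj. destruct (SP j hj) as (fd & fc & fp & gc & cons).
    destruct (HA j hj) as (m1 & m2 & m3 & m4 & m5 & m6 & _ & _ & fl & _).
    destruct (Hsol j hj) as (Ac & An & Aphi & taun & t0p & _ & Ad & _).
    apply (bounded (A j) (fun s => f j (Zfun n zeta A j s)) (f j) (tau j) (muA j) (muJ j) (beta j) (zeta j j) (tau0 j)); auto.
    - intros eps ep. destruct (fl eps ep) as [X HX]. exists X; intros x hx.
      specialize (HX x hx). rewrite Rabs_right in HX; auto. left; apply fp.
    - intros s. apply fd. unfold Zfun.
      apply (sum_ge (fun k => zeta j k * A k s)); auto.
      intros k hk. destruct (HA j hj) as (_ & _ & _ & _ & z & _). specialize (z k hk).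
      specialize (Apos k hk s). nra.
    - intros t tp. apply deriv_conv; auto. apply Ad; lra.
    - rewrite <- (RInt_eq1 _ _ _ _ (Hint j hj)). apply RInt_ext. intros x [h1 h2].
      assert (t0 : tau0 j >= 0) by auto.
      rewrite Rmax_right in h2 by lra. unfold Zfun. f_equal. apply sum_ext. intros k hk.
      destruct (Hsol k hk) as (_&_&Ak&_). rewrite Ak by lra. auto. }
  intros i hi.
  destruct (sum_bound (fun k t => zeta i k * A k t) n) as [Zm HZ].
  { intros k hk. destruct (Bnd k hk) as [B HB]. exists (zeta i k * B). intros t tp.
    destruct (HA i hi) as (_ & _ & _ & _ & z & _). specialize (z k hk).
    apply Rmult_le_compat_l; [lra|auto]. }
  destruct (SP i hi) as (fd & fc & fp & gc & cons).
  set (g := fun s => f i (Zfun n zeta A i s)) in *.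
  set (c := f i Zm). assert (cp : 0 < c) by apply fp.
  assert (gL : forall t, 0 <= t -> c <= g t).
  { intros t tp. apply fd. apply HZ; auto. }
  set (T := 1 / c). assert (Tp : 0 < T) by (apply Rdiv_lt_0_compat; lra).
  assert (HT : 1 <= RInt g 0 T).
  { assert (L := RInt_lb g 0 T c gc ltac:(lra) ltac:(intros; apply gL; lra)).
    replace ((T - 0) * c) with 1 in L by (unfold T; field; lra). lra. }
  set (G := fun x => RInt g 0 x).
  assert (Gc : continuity G) by (intros x; apply derivable_continuous_pt; exists (g x); apply G_deriv; auto).
  assert (G0 : G 0 = 0) by (unfold G; rewrite RInt_point; reflexivity).
  destruct (IVT_gen G 0 T 1 Gc) as [ts [Hts Gts]].
  { rewrite G0, Rmin_left, Rmax_right; unfold G; lra. }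
  rewrite Rmin_left, Rmax_right in Hts by lra.
  assert (tsp : 0 < ts) by (destruct (Req_dec ts 0) as [->|ne]; [rewrite G0 in Gts; lra|lra]).
  exists ts. split; [lra|].
  set (us := ts - tau i ts).
  assert (E : RInt g 0 us = 0).
  { pose proof (chas g 0 us ts gc) as C. unfold us in C |- *. rewrite cons in C by lra.
    unfold G in Gts. change (RInt g 0 (ts - tau i ts) + 1 = RInt g 0 ts) in C. lra. }
  destruct (Rtotal_order us 0) as [h|[h|h]]; auto; exfalso.
  - pose proof (chas g us 0 us gc) as C. rewrite RInt_point in C.
    assert (0 < RInt g us 0) by (apply RInt_pos; [exact gc|intros; apply fp|lra]).
    change (RInt g us 0 + RInt g 0 us = 0) in C. lra.
  - assert (0 < RInt g 0 us) by (apply RInt_pos; [exact gc|intros; apply fp|lra]). lra.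
Qed.
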